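(* Suppose that $\kappa = \nu^+$, and $J$ is a $\kappa$-complete ideal on $\kappa$ such that $\clubsuit_\kappa^{{\rm cof},-}[J]$ holds. Then there exist $A^i_\delta \in P_\nu(\kappa\times\kappa)$ for $\delta<\kappa$ and $i<\nu$ such that for any $F : \kappa\to\kappa$, the set $\{\delta<\kappa : \exists i<\nu\,\exists Z\subseteq\delta\,(\sup Z = \delta \text{ and } F|Z \subseteq A^i_\delta)\}$ lies in $J^+$ (where $F|Z$ is identified with its graph $\{(\alpha, F(\alpha)) : \alpha \in Z\}$).
   Context: An ideal on $\kappa$ is a nonempty $J \subseteq P(\kappa)$ with $\kappa \notin J$, every bounded subset of $\kappa$ in $J$, $J$ closed under subsets and under unions of two members; $J^+ = P(\kappa)\setminus J$; $\kappa$-complete means closed under unions of fewer than $\kappa$ members. $P_\rho(X) = \{x\subseteq X : |x|<\rho\}$. $\clubsuit_\kappa^{{\rm cof},-}[J]$: there are $B^i_\delta \in P_{|\delta|}(\delta)$ for $i<\delta<\kappa$ such that for every $W\subseteq\kappa$ of size $\kappa$, $\{\delta<\kappa : \exists i<\delta\,(\sup(W\cap B^i_\delta)=\delta)\}\in J^+$. *)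

(* Defs.v *)
(* Ordinals below kappa are modelled by a type K carrying a
   strict well-order [lt]; the order type of (K, lt) plays the role of kappa.
   Subsets are predicates [X -> Prop]. *)
From Stdlib Require Import Relations Wellfounded.

Set Implicit Arguments.

Definition strict_well_order (K : Type) (lt : K -> K -> Prop) : Prop :=
  (forall x y z, lt x y -> lt y z -> lt x z) /\
  (forall x y, lt x y \/ x = y \/ lt y x) /\
  well_founded lt.

Definition le_of (K : Type) (lt : K -> K -> Prop) (x y : K) : Prop :=
  lt x y \/ x = y.

(* the initial segment {x | x < d}, i.e. the ordinal d *)
Definition seg (K : Type) (lt : K -> K -> Prop) (d : K) : K -> Prop :=
  fun x => lt x d.

Definition fullset (X : Type) : X -> Prop := fun _ => True.
Arguments fullset X _ : clear implicits.

Definition card_le (X Y : Type) (A : X -> Prop) (B : Y -> Prop) : Prop :=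
  exists f : {x : X | A x} -> {y : Y | B y},
    forall u v, f u = f v -> u = v.

Definition card_lt (X Y : Type) (A : X -> Prop) (B : Y -> Prop) : Prop :=
  card_le A B /\ ~ card_le B A.

Definition card_eq (X Y : Type) (A : X -> Prop) (B : Y -> Prop) : Prop :=
  card_le A B /\ card_le B A.

(* sup Z = d, where sup Z is the union of the ordinals in Z *)
Definition sup_is (K : Type) (lt : K -> K -> Prop) (Z : K -> Prop) (d : K) : Prop :=
  (forall x, Z x -> le_of lt x d) /\
  (forall g, lt g d -> exists b, Z b /\ lt g b).

Definition bounded (K : Type) (lt : K -> K -> Prop) (X : K -> Prop) : Prop :=
  exists b, forall x, X x -> le_of lt x b.

Definition is_ideal (K : Type) (lt : K -> K -> Prop) (J : (K -> Prop) -> Prop) : Prop :=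
  (exists X, J X) /\
  ~ J (fullset K) /\
  (forall X, bounded lt X -> J X) /\
  (forall X Y, J X -> (forall x, Y x -> X x) -> J Y) /\
  (forall X Y, J X -> J Y -> J (fun x => X x \/ Y x)).

Definition kappa_complete (K : Type) (J : (K -> Prop) -> Prop) : Prop :=
  forall Fam : (K -> Prop) -> Prop,
    (forall X, Fam X -> J X) ->
    card_lt Fam (fullset K) ->
    J (fun x => exists X, Fam X /\ X x).

(* kappa = nu^+ : nu < kappa is a cardinal, every ordinal below kappa has
   cardinality <= nu, and kappa has cardinality > nu. *)
Definition is_succ_of (K : Type) (lt : K -> K -> Prop) (nu : K) : Prop :=
  (forall g, lt g nu -> ~ card_le (seg lt nu) (seg lt g)) /\
  (forall d, card_le (seg lt d) (seg lt nu)) /\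
  ~ card_le (fullset K) (seg lt nu).

Definition club_cof_minus (K : Type) (lt : K -> K -> Prop)
    (J : (K -> Prop) -> Prop) : Prop :=
  exists B : K -> K -> K -> Prop,
    (forall d i, lt i d ->
       (forall x, B i d x -> lt x d) /\ card_lt (B i d) (seg lt d)) /\
    (forall W : K -> Prop, card_eq W (fullset K) ->
       ~ J (fun d => exists i, lt i d /\
                     sup_is lt (fun x => W x /\ B i d x) d)).

(* Main.v *)
Require Import Defs.
From Stdlib Require Import Relations Wellfounded Lexicographic_Product.
From Stdlib Require Import Classical ClassicalEpsilon FunctionalExtensionality ProofIrrelevance Lia Arith PeanoNat.

Lemma sig_eq (X : Type) (P : X -> Prop) (u v : {x | P x}) :
  proj1_sig u = proj1_sig v -> u = v.
Proof. destruct u, v; simpl; intros ->; f_equal; apply proof_irrelevance. Qed.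

Lemma cl_of_fun {X Y : Type} {A : X -> Prop} {B : Y -> Prop} (g : X -> Y) :
  (forall x, A x -> B (g x)) ->
  (forall x y, A x -> A y -> g x = g y -> x = y) -> card_le A B.
Proof.
  intros HB Hi.
  exists (fun u => exist _ (g (proj1_sig u)) (HB _ (proj2_sig u))).
  intros [u Hu] [v Hv] E. apply (f_equal (@proj1_sig _ _)) in E. simpl in E.
  apply sig_eq; simpl; auto.
Qed.

Lemma cl_to_fun {X Y : Type} {A : X -> Prop} {B : Y -> Prop} (y0 : Y) :
  card_le A B -> exists g : X -> Y, (forall x, A x -> B (g x)) /\
     (forall x y, A x -> A y -> g x = g y -> x = y).
Proof.
  intros [f Hf].
  exists (fun x => match excluded_middle_informative (A x) with
           | left H => proj1_sig (f (exist _ x H)) | right _ => y0 end).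
  split.
  - intros x Hx. destruct (excluded_middle_informative (A x)) as [H|H];
      [apply (proj2_sig (f _)) | contradiction].
  - intros x y Hx Hy. destruct (excluded_middle_informative (A x)) as [H1|H1]; [|contradiction].
    destruct (excluded_middle_informative (A y)) as [H2|H2]; [|contradiction].
    intro E. apply sig_eq in E. apply Hf in E. apply (f_equal (@proj1_sig _ _)) in E. exact E.
Qed.

Lemma cl_trans (X Y Z : Type) (A : X -> Prop) (B : Y -> Prop) (C : Z -> Prop) :
  card_le A B -> card_le B C -> card_le A C.
Proof.
  intros [f Hf] [g Hg]. exists (fun u => g (f u)). intros u v E. auto.
Qed.

Lemma cl_sub (X : Type) (A B : X -> Prop) : (forall x, A x -> B x) -> card_le A B.
Proof. intros H. apply (cl_of_fun (fun x => x)); auto. Qed.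

Lemma cl_prod {X Y X' Y' : Type} {A : X -> Prop} {B : Y -> Prop} {A' : X' -> Prop} {B' : Y' -> Prop} :
  card_le A A' -> card_le B B' ->
  card_le (fun q : X * Y => A (fst q) /\ B (snd q)) (fun q : X' * Y' => A' (fst q) /\ B' (snd q)).
Proof.
  intros [f Hf] [g Hg].
  unshelve eexists.
  - intros [[x y] [Hx Hy]].
    exists (proj1_sig (f (exist _ x Hx)), proj1_sig (g (exist _ y Hy))). simpl.
    split; apply proj2_sig.
  - intros [[x y] [Hx Hy]] [[x' y'] [Hx' Hy']] E.
    apply (f_equal (@proj1_sig _ _)) in E. simpl in E. injection E as E1 E2.
    apply sig_eq in E1. apply sig_eq in E2. apply Hf in E1. apply Hg in E2.
    apply (f_equal (@proj1_sig _ _)) in E1. apply (f_equal (@proj1_sig _ _)) in E2.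
    simpl in E1, E2. subst. apply sig_eq. reflexivity.
Qed.

Lemma nat_not_fin : forall M, ~ card_le (fullset nat) (fun k => k < M).
Proof.
  intros M H. apply (cl_to_fun 0) in H. destruct H as [h [Hh Hi]].
  assert (Hh' : forall n, h n < M) by (intro; apply Hh; exact I).
  assert (Hi' : forall n m, h n = h m -> n = m) by (intros; apply Hi; auto; exact I).
  clear Hh Hi. revert h Hh' Hi'. induction M as [|M IH]; intros h Hh Hi.
  - specialize (Hh 0). lia.
  - apply (IH (fun n => if Nat.eq_dec (h (S n)) M then h 0 else h (S n))).
    + intro n. destruct (Nat.eq_dec (h (S n)) M) as [E|E].
      * assert (h 0 <> M) by (intro E'; rewrite <- E in E'; apply Hi in E'; discriminate).
        specialize (Hh 0). lia.
      * specialize (Hh (S n)). lia.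
    + intros n m. destruct (Nat.eq_dec (h (S n)) M) as [E|E];
      destruct (Nat.eq_dec (h (S m)) M) as [E'|E']; intro X.
      * rewrite <- E' in E. apply Hi in E. injection E; auto.
      * apply Hi in X. discriminate.
      * apply Hi in X. discriminate.
      * apply Hi in X. injection X; auto.
Qed.

Lemma fin_sq (N : nat) :
  card_le (fun q : nat * nat => fst q < N /\ snd q < N) (fun k => k < N * N).
Proof.
  apply (cl_of_fun (fun q => fst q * N + snd q)).
  - intros [a b] [Ha Hb]; simpl in *. nia.
  - intros [a b] [a' b'] [Ha Hb] [Ha' Hb']; simpl in *. intro E.
    assert (a = a') by nia. subst. f_equal. lia.
Qed.

Lemma wo_irrefl {K} (lt : K->K->Prop) : strict_well_order lt -> forall x, ~ lt x x.
Proof. intros [_ [_ wf]] x. induction (wf x) as [x _ IH]. intro H. exact (IH x H H). Qed.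

Lemma wo_min {K} (lt : K->K->Prop) : strict_well_order lt ->
  forall (P : K -> Prop) x, P x -> exists m, P m /\ forall y, P y -> ~ lt y m.
Proof.
  intros [_ [_ wf]] P x Hx. induction (wf x) as [x _ IH].
  destruct (classic (exists y, P y /\ lt y x)) as [[y [Py Hy]]|N].
  - exact (IH y Hy Py).
  - exists x. split; auto. intros y Py Hy. apply N; eauto.
Qed.

Lemma nomax_nat {K} (lt : K->K->Prop) (Hwo : strict_well_order lt) (m x0 : K) :
  lt x0 m -> (forall s, lt s m -> exists y, lt y m /\ lt s y) ->
  card_le (fullset nat) (seg lt m).
Proof.
  intros H0 Hn.
  set (nx := fun s => epsilon (inhabits x0) (fun y => lt y m /\ lt s y)).
  assert (Hnx : forall s, lt s m -> lt (nx s) m /\ lt s (nx s)).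
  { intros s Hs. apply (epsilon_spec (inhabits x0) (fun y => lt y m /\ lt s y)). auto. }
  set (sq := fun n => Nat.iter n nx x0).
  assert (Hm : forall n, lt (sq n) m).
  { induction n; simpl; auto. apply Hnx. auto. }
  assert (Hinc : forall n k, lt (sq n) (sq (S (k + n)))).
  { intros n k. induction k; simpl.
    - apply Hnx. apply Hm.
    - destruct Hwo as [Ht _]. eapply Ht; [exact IHk|]. exact (proj2 (Hnx _ (Hm (S (k + n))))). }
  apply (cl_of_fun sq).
  - intros n _. apply Hm.
  - intros n n' _ _ E. destruct (Nat.lt_total n n') as [L|[L|L]]; auto; exfalso.
    + specialize (Hinc n (n' - S n)). replace (S (n' - S n + n)) with n' in Hinc by lia.
      rewrite E in Hinc. exact (wo_irrefl lt Hwo _ Hinc).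
    + specialize (Hinc n' (n - S n')). replace (S (n - S n' + n')) with n in Hinc by lia.
      rewrite E in Hinc. exact (wo_irrefl lt Hwo _ Hinc).
Qed.

Lemma hotel {K} (lt : K->K->Prop) (Hwo : strict_well_order lt) (m : K) :
  card_le (fullset nat) (seg lt m) -> card_le (fun x => le_of lt x m) (seg lt m).
Proof.
  intros H. apply (cl_to_fun m) in H. destruct H as [e [He Hi]].
  assert (He' : forall n, lt (e n) m) by (intro; apply He; exact I).
  assert (Hi' : forall n k, e n = e k -> n = k) by (intros; apply Hi; auto; exact I).
  clear He Hi.
  set (g := fun x => if excluded_middle_informative (x = m) then e 0 else
              match excluded_middle_informative (exists k, x = e k) with
              | left H => e (S (proj1_sig (constructive_indefinite_description _ H)))
              | right _ => x end).
  apply (cl_of_fun g).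
  - intros x Hx. unfold g, seg. destruct (excluded_middle_informative (x = m)); auto.
    destruct (excluded_middle_informative (exists k, x = e k)); auto.
    destruct Hx; [auto|contradiction].
  - intros x y Hx Hy. unfold g.
    destruct (excluded_middle_informative (x = m)) as [Ex|Ex];
    destruct (excluded_middle_informative (y = m)) as [Ey|Ey]; try congruence.
    + destruct (excluded_middle_informative (exists k, y = e k)) as [Hy'|Hy'].
      * destruct (constructive_indefinite_description _ Hy') as [k Hk]; simpl.
        intro E. apply Hi' in E. discriminate.
      * intro E. exfalso. apply Hy'. eauto.
    + destruct (excluded_middle_informative (exists k, x = e k)) as [Hx'|Hx'].
      * destruct (constructive_indefinite_description _ Hx') as [k Hk]; simpl.
        intro E. apply Hi' in E. discriminate.
      * intro E. exfalso. apply Hx'. eauto.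
    + destruct (excluded_middle_informative (exists k, x = e k)) as [Hx'|Hx'];
      destruct (excluded_middle_informative (exists k, y = e k)) as [Hy'|Hy'].
      * destruct (constructive_indefinite_description _ Hx') as [k Hk]; simpl.
        destruct (constructive_indefinite_description _ Hy') as [k' Hk']; simpl.
        intro E. apply Hi' in E. injection E as E. congruence.
      * destruct (constructive_indefinite_description _ Hx') as [k Hk]; simpl.
        intro E. exfalso. apply Hy'. eauto.
      * destruct (constructive_indefinite_description _ Hy') as [k Hk]; simpl.
        intro E. exfalso. apply Hx'. eauto.
      * auto.
Qed.

Lemma fin_succ {K} (lt : K->K->Prop) (m : K) (n : nat) :
  card_le (seg lt m) (fun k => k < n) -> card_le (fun x => le_of lt x m) (fun k => k < S n).
Proof.
  intros H. apply (cl_to_fun 0) in H. destruct H as [h [Hh Hi]].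
  apply (cl_of_fun (fun x => if excluded_middle_informative (x = m) then n else h x)).
  - intros x Hx. destruct (excluded_middle_informative (x = m)); [lia|].
    destruct Hx; [|contradiction]. specialize (Hh x H). lia.
  - intros x y Hx Hy.
    destruct (excluded_middle_informative (x = m)) as [Ex|Ex];
    destruct (excluded_middle_informative (y = m)) as [Ey|Ey]; try congruence.
    + destruct Hy; [|contradiction]. specialize (Hh y H). lia.
    + destruct Hx; [|contradiction]. specialize (Hh x H). lia.
    + destruct Hx; [|contradiction]. destruct Hy; [|contradiction]. auto.
Qed.

Lemma fin_seg {K} (lt : K->K->Prop) (Hwo : strict_well_order lt) :
  forall m, ~ card_le (fullset nat) (seg lt m) -> exists n, card_le (seg lt m) (fun k => k < n).
Proof.
  pose proof Hwo as [Ht [Htri wf]].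
  intro m. induction (wf m) as [m _ IH]. intros Hnf.
  destruct (classic (exists x, lt x m)) as [[x0 Hx0]|N].
  - destruct (classic (exists s, lt s m /\ forall x, lt x m -> le_of lt x s)) as [[s [Hs Hmax]]|N2].
    + destruct (IH s Hs) as [n Hn].
      { intro C. apply Hnf. eapply cl_trans; [exact C|]. apply cl_sub. intros x Hx. unfold seg in *. eauto. }
      exists (S n). eapply cl_trans; [|apply (fin_succ lt s n Hn)]. apply cl_sub. intros x Hx. apply Hmax. exact Hx.
    + exfalso. apply Hnf. apply (nomax_nat lt Hwo m x0 Hx0). intros s Hs.
      destruct (classic (exists y, lt y m /\ lt s y)) as [Y|NY]; auto.
      exfalso. apply N2. exists s. split; auto. intros x Hx.
      destruct (Htri x s) as [L|[L|L]]; unfold le_of; auto. exfalso. eauto.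
  - exists 0. apply (cl_of_fun (fun _ => 0)).
    + intros x Hx. exfalso. eauto.
    + intros x y Hx. exfalso. eauto.
Qed.

Lemma rec_inj {P X : Type} (R : P -> P -> Prop) (D : P -> Prop) (T : X -> Prop) (x0 : X) :
  well_founded R -> (forall a b, R a b \/ a = b \/ R b a) ->
  (forall q, D q -> ~ card_le T (fun q' => D q' /\ R q' q)) ->
  card_le D T.
Proof.
  intros wf tri H.
  set (step := fun (q : P) (rec : forall q', R q' q -> X) =>
         epsilon (inhabits x0) (fun t => T t /\ forall q' (Hq : R q' q), D q' -> rec q' Hq <> t)).
  set (pi := Fix wf (fun _ => X) step).
  assert (Heq : forall q, pi q = step q (fun q' _ => pi q')).
  { intro q. unfold pi. refine (Fix_eq wf (fun _ => X) step _ q). intros x f g Hfg.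
    assert (f = g) by (apply functional_extensionality_dep; intro y;
                       apply functional_extensionality_dep; intro p; apply Hfg).
    subst; reflexivity. }
  assert (Hspec : forall q, D q -> T (pi q) /\ forall q', R q' q -> D q' -> pi q' <> pi q).
  { intros q Dq. rewrite Heq. unfold step.
    set (Pr := fun t => T t /\ forall q' (Hq : R q' q), D q' -> pi q' <> t).
    assert (Ex : exists t, Pr t).
    { apply NNPP. intro N. apply (H q Dq).
      assert (Hc : forall t, T t -> exists q', D q' /\ R q' q /\ pi q' = t).
      { intros t Tt. apply NNPP. intro N2. apply N. exists t. split; auto.
        intros q' Hq Dq' E. apply N2. eauto. }
      apply (cl_of_fun (fun t => epsilon (inhabits q) (fun q' => D q' /\ R q' q /\ pi q' = t))).
      - intros t Tt. pose proof (epsilon_spec (inhabits q) _ (Hc t Tt)) as [A [B _]]. split; auto.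
      - intros t t' Tt Tt' E.
        pose proof (epsilon_spec (inhabits q) _ (Hc t Tt)) as [_ [_ C]].
        pose proof (epsilon_spec (inhabits q) _ (Hc t' Tt')) as [_ [_ C']].
        rewrite E in C. congruence. }
    pose proof (epsilon_spec (inhabits x0) Pr Ex) as [A B].
    split; [exact A|]. intros q' Hq Dq'. exact (B q' Hq Dq'). }
  apply (cl_of_fun pi).
  - intros q Dq. apply Hspec; auto.
  - intros a b Da Db E. destruct (tri a b) as [L|[L|L]]; auto; exfalso.
    + apply (proj2 (Hspec b Db) a L Da). auto.
    + apply (proj2 (Hspec a Da) b L Db). auto.
Qed.

Definition mx {K} (lt : K->K->Prop) (a b : K) : K :=
  if excluded_middle_informative (lt a b) then b else a.

Definition godel {K} (lt : K->K->Prop) (q' q : K*K) : Prop :=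
  slexprod K (K*K) lt (slexprod K K lt lt) (mx lt (fst q') (snd q'), q') (mx lt (fst q) (snd q), q).

Lemma godel_wf {K} (lt : K->K->Prop) : strict_well_order lt -> well_founded (godel lt).
Proof.
  intros [_ [_ wf]]. unfold godel.
  apply (wf_inverse_image (K*K) (K*(K*K)) _ (fun q => (mx lt (fst q) (snd q), q))).
  apply wf_slexprod; auto. apply wf_slexprod; auto.
Qed.

Lemma slex_tri {A B} (la : A->A->Prop) (lb : B->B->Prop) :
  (forall x y, la x y \/ x = y \/ la y x) -> (forall x y, lb x y \/ x = y \/ lb y x) ->
  forall p q, slexprod A B la lb p q \/ p = q \/ slexprod A B la lb q p.
Proof.
  intros ta tb [a b] [a' b']. destruct (ta a a') as [L|[L|L]].
  - left. constructor. auto.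
  - subst. destruct (tb b b') as [M|[M|M]].
    + left. apply right_slex. auto.
    + subst. auto.
    + right; right. apply right_slex. auto.
  - right; right. constructor. auto.
Qed.

Lemma godel_tri {K} (lt : K->K->Prop) : strict_well_order lt ->
  forall a b, godel lt a b \/ a = b \/ godel lt b a.
Proof.
  intros [_ [tri _]] a b. unfold godel.
  destruct (slex_tri lt (slexprod K K lt lt) tri (slex_tri lt lt tri tri)
             (mx lt (fst a) (snd a), a) (mx lt (fst b) (snd b), b)) as [L|[L|L]]; auto.
  right; left. injection L; auto.
Qed.

Lemma mx_ge {K} (lt : K->K->Prop) : strict_well_order lt ->
  forall a b, le_of lt a (mx lt a b) /\ le_of lt b (mx lt a b).
Proof.
  intros [_ [tri _]] a b. unfold mx, le_of.
  destruct (excluded_middle_informative (lt a b)); auto.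
  split; auto. destruct (tri a b) as [L|[L|L]]; auto. contradiction.
Qed.

Lemma mx_lt {K} (lt : K->K->Prop) a b d : lt a d -> lt b d -> lt (mx lt a b) d.
Proof. unfold mx. destruct (excluded_middle_informative (lt a b)); auto. Qed.

Lemma le_lt_trans {K} (lt : K->K->Prop) : strict_well_order lt ->
  forall a b c, le_of lt a b -> lt b c -> lt a c.
Proof. intros [Ht _] a b c [H|H] H2; [eauto|subst; auto]. Qed.

Lemma le_trans' {K} (lt : K->K->Prop) : strict_well_order lt ->
  forall a b c, le_of lt a b -> le_of lt b c -> le_of lt a c.
Proof. intros Hwo a b c H [H2|H2]; [left; eapply (le_lt_trans lt Hwo); eauto| subst; auto]. Qed.

Lemma godel_pred {K} (lt : K->K->Prop) : strict_well_order lt ->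
  forall q' q, godel lt q' q ->
    le_of lt (fst q') (mx lt (fst q) (snd q)) /\ le_of lt (snd q') (mx lt (fst q) (snd q)).
Proof.
  intros Hwo q' q H. unfold godel in H.
  assert (Hm : le_of lt (mx lt (fst q') (snd q')) (mx lt (fst q) (snd q))).
  { inversion H; subst; [left; auto| right; auto]. }
  destruct (mx_ge lt Hwo (fst q') (snd q')) as [A B].
  split; eapply (le_trans' lt Hwo); eauto.
Qed.

Definition sqs {K} (lt : K->K->Prop) (d : K) := fun q : K*K => lt (fst q) d /\ lt (snd q) d.
Definition sqle {K} (lt : K->K->Prop) (d : K) := fun q : K*K => le_of lt (fst q) d /\ le_of lt (snd q) d.

Lemma hess {K} (lt : K->K->Prop) (Hwo : strict_well_order lt) :
  forall d, card_le (fullset nat) (seg lt d) -> card_le (sqs lt d) (seg lt d).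
Proof.
  pose proof Hwo as [Ht [Htri wf]].
  intro d. induction (wf d) as [d _ IH]. intros Hnd.
  destruct (classic (exists g, lt g d /\ card_le (seg lt d) (seg lt g))) as [[g [Hg Hc]]|N].
  - assert (Hng : card_le (fullset nat) (seg lt g)) by (eapply cl_trans; eauto).
    specialize (IH g Hg Hng).
    eapply cl_trans; [|eapply cl_trans; [exact IH|]].
    + apply (cl_prod Hc Hc).
    + apply cl_sub. intros x Hx. unfold seg in *. eauto.
  - apply (rec_inj (godel lt) (sqs lt d) (seg lt d) d (godel_wf lt Hwo) (godel_tri lt Hwo)).
    intros [a b] [Ha Hb] C. simpl in Ha, Hb.
    set (m := mx lt a b) in *.
    assert (Hmd : lt m d) by (apply mx_lt; auto).
    assert (C2 : card_le (seg lt d) (sqle lt m)).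
    { eapply cl_trans; [exact C|]. apply cl_sub. intros q' [_ Hq'].
      apply (godel_pred lt Hwo) in Hq'. exact Hq'. }
    destruct (classic (card_le (fullset nat) (seg lt m))) as [Hnm|Hnm].
    + apply N. exists m. split; auto.
      eapply cl_trans; [exact C2|]. eapply cl_trans; [|exact (IH m Hmd Hnm)].
      pose proof (hotel lt Hwo m Hnm) as Hh. exact (cl_prod Hh Hh).
    + destruct (fin_seg lt Hwo m Hnm) as [n Hn].
      pose proof (fin_succ lt m n Hn) as Hs.
      apply (nat_not_fin (S n * S n)).
      eapply cl_trans; [exact Hnd|]. eapply cl_trans; [exact C2|].
      eapply cl_trans; [exact (cl_prod Hs Hs)|]. apply fin_sq.
Qed.

Lemma nomax {K} (lt : K->K->Prop) (J : (K->Prop)->Prop) : strict_well_order lt -> is_ideal lt J ->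
  forall m, exists m', lt m m'.
Proof.
  intros [_ [tri _]] [_ [HnK [Hb _]]] m. apply NNPP. intro N. apply HnK. apply Hb. exists m.
  intros x _. destruct (tri x m) as [L|[L|L]]; unfold le_of; auto. exfalso; eauto.
Qed.

Lemma lt_le_trans {K} (lt : K->K->Prop) : strict_well_order lt ->
  forall a b c, lt a b -> le_of lt b c -> lt a c.
Proof. intros [Ht _] a b c H [H2|H2]; [eauto| subst; auto]. Qed.

Lemma big_unb {K} (lt : K->K->Prop) (J : (K->Prop)->Prop) (nu : K) :
  strict_well_order lt -> is_ideal lt J -> is_succ_of lt nu ->
  forall X, card_le (fullset K) X -> forall g, exists x, X x /\ lt g x.
Proof.
  intros Hwo HJ [_ [Hall Hbig]] X HX g. apply NNPP. intro N.
  destruct (nomax lt J Hwo HJ g) as [g' Hg'].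
  apply Hbig. eapply cl_trans; [exact HX|]. eapply cl_trans; [|exact (Hall g')].
  apply cl_sub. intros x Hx. unfold seg. destruct Hwo as [Ht [tri _]].
  destruct (tri g x) as [L|[L|L]]; [exfalso; eauto| subst; auto | eauto].
Qed.

Lemma unb_big {K} (lt : K->K->Prop) (J : (K->Prop)->Prop) (k0 : K) :
  strict_well_order lt -> is_ideal lt J -> kappa_complete J ->
  forall X, (forall g, exists x, X x /\ lt g x) -> card_le (fullset K) X.
Proof.
  intros Hwo [_ [HnK [Hb [Hs _]]]] Hc X HX. apply NNPP. intro N.
  set (Fam := fun S : K -> Prop => exists x, X x /\ S = seg lt x).
  set (r := fun S : K -> Prop => epsilon (inhabits k0) (fun x => X x /\ S = seg lt x)).
  assert (Hr : forall S, Fam S -> X (r S) /\ S = seg lt (r S)).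
  { intros S HS. exact (epsilon_spec (inhabits k0) (fun x => X x /\ S = seg lt x) HS). }
  assert (Hri : forall S S', Fam S -> Fam S' -> r S = r S' -> S = S').
  { intros S S' H1 H2 E. rewrite (proj2 (Hr S H1)), (proj2 (Hr S' H2)), E. reflexivity. }
  apply HnK. apply (Hs (fun x => exists S, Fam S /\ S x)).
  - apply Hc.
    + intros S [x [Xx ->]]. apply Hb. exists x. intros y Hy. left. exact Hy.
    + split.
      * apply (cl_of_fun r); auto. intros; exact I.
      * intro C. apply N. eapply cl_trans; [exact C|]. apply (cl_of_fun r); auto. intros S HS; apply Hr; auto.
  - intros y _. destruct (HX y) as [x [Xx Hx]]. exists (seg lt x). split; [exists x; auto| exact Hx].
Qed.

Theorem lemma3p8 (K : Type) (lt : K -> K -> Prop)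
  (Hwo : strict_well_order lt) (nu : K) (Hsucc : is_succ_of lt nu)
  (J : (K -> Prop) -> Prop) (HJ : is_ideal lt J) (Hcomp : kappa_complete J)
  (Hclub : club_cof_minus lt J) :
  exists A : K -> K -> (K * K) -> Prop,   (* A d i = A^i_d *)
    (forall d i, lt i nu -> card_lt (A d i) (seg lt nu)) /\
    (forall F : K -> K,
       ~ J (fun d => exists i, lt i nu /\
              exists Z : K -> Prop,
                (forall x, Z x -> lt x d) /\ sup_is lt Z d /\
                (forall a, Z a -> A d i (a, F a)))).
Proof.
  pose proof Hwo as [Ht [Htri Hwf]].
  pose proof Hsucc as [Hcn [Hall Hbig]].
  pose proof HJ as [[X0 HX0] [HnK [Hbd [Hsub Hun]]]].
  destruct Hclub as [B [HB1 HB2]].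
  pose proof (wo_irrefl lt Hwo) as Hirr.
  assert (Hnat : card_le (fullset nat) (seg lt nu)).
  { assert (Hne : exists d i, lt i d /\ sup_is lt (fun x => fullset K x /\ B i d x) d).
    { apply NNPP. intro N. apply (HB2 (fullset K)).
      - split; apply cl_sub; auto.
      - apply (Hsub X0 _ HX0). intros d [i [Hi Hs]]. exfalso. apply N. eauto. }
    destruct Hne as [d [i [Hi [_ Hs2]]]].
    eapply cl_trans; [|exact (Hall d)].
    apply (nomax_nat lt Hwo d i Hi). intros s Hs. destruct (Hs2 s Hs) as [b [[_ Bb] Hsb]].
    exists b. split; auto. exact (proj1 (HB1 d i Hi) b Bb). }
  assert (Hpair : card_le (fullset (K*K)) (fullset K)).
  { apply (rec_inj (godel lt) (fullset (K*K)) (fullset K) nu (godel_wf lt Hwo) (godel_tri lt Hwo)).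
    intros [a b] _ C.
    destruct (nomax lt J Hwo HJ (mx lt a b)) as [m' Hm'].
    apply Hbig. eapply cl_trans; [exact C|].
    eapply cl_trans; [|exact (hess lt Hwo nu Hnat)].
    eapply cl_trans; [|exact (cl_prod (Hall m') (Hall m'))].
    apply cl_sub. intros q' [_ Hq']. apply (godel_pred lt Hwo) in Hq'. destruct Hq' as [A1 A2].
    simpl in A1, A2. unfold seg. split; eapply (le_lt_trans lt Hwo); eauto. }
  apply (cl_to_fun nu) in Hpair. destruct Hpair as [p [_ Hp]].
  assert (Hpi : forall u v, p u = p v -> u = v) by (intros; apply Hp; auto; exact I).
  clear Hp.
  set (dec := fun w => epsilon (inhabits (nu,nu)) (fun cy => exists z, w = p (p cy, z))).
  assert (Hdec : forall cy z, dec (p (p cy, z)) = cy).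
  { intros cy z. unfold dec.
    pose proof (epsilon_spec (inhabits (nu,nu)) (fun cy' => exists z', p (p cy, z) = p (p cy', z'))
      (ex_intro _ cy (ex_intro _ z eq_refl))) as [z' E].
    apply Hpi in E. injection E as E _. apply Hpi in E. congruence. }
  assert (Hcode : forall c y g, exists w, lt g w /\ dec w = (c, y)).
  { intros c y g.
    assert (HX : card_le (fullset K) (fun w => exists z, w = p (p (c,y), z))).
    { apply (cl_of_fun (fun z => p (p (c,y), z))).
      + intros z _. eauto.
      + intros z z' _ _ E. apply Hpi in E. injection E; auto. }
    destruct (big_unb lt J nu Hwo HJ Hsucc _ HX g) as [w [[z ->] Hw]].
    exists (p (p (c,y), z)). split; auto. }
  assert (He : exists e : K -> K -> K, forall d, (forall x, lt x d -> lt (e d x) nu) /\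
             (forall x y, lt x d -> lt y d -> e d x = e d y -> x = y)).
  { exists (fun d => proj1_sig (constructive_indefinite_description _ (cl_to_fun nu (Hall d)))).
    intro d. destruct (constructive_indefinite_description _ (cl_to_fun nu (Hall d))) as [f Hf].
    simpl. exact Hf. }
  destruct He as [e He].
  exists (fun d i q => exists j, lt j d /\ e d j = i /\ exists w, B j d w /\ dec w = q).
  split.
  - intros d i Hi.
    destruct (classic (exists j, lt j d /\ e d j = i)) as [[j [Hj Ej]]|N].
    + assert (HA : card_le (fun q => exists j, lt j d /\ e d j = i /\ exists w, B j d w /\ dec w = q) (B j d)).
      { apply (cl_of_fun (fun q => epsilon (inhabits nu) (fun w => B j d w /\ dec w = q))).
        - intros q [j' [Hj' [Ej' Ex]]].
          assert (j' = j) by (apply (proj2 (He d)); auto; congruence). subst j'.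
          exact (proj1 (epsilon_spec (inhabits nu) _ Ex)).
        - intros q q' [j1 [Hj1 [Ej1 Ex1]]] [j2 [Hj2 [Ej2 Ex2]]] E.
          assert (j1 = j) by (apply (proj2 (He d)); auto; congruence).
          assert (j2 = j) by (apply (proj2 (He d)); auto; congruence). subst j1 j2.
          pose proof (proj2 (epsilon_spec (inhabits nu) _ Ex1)) as D1.
          pose proof (proj2 (epsilon_spec (inhabits nu) _ Ex2)) as D2.
          cbv beta in E. rewrite E in D1. congruence. }
      destruct (HB1 d j Hj) as [_ [HBle HBnot]].
      split.
      * eapply cl_trans; [exact HA|]. eapply cl_trans; [exact HBle| exact (Hall d)].
      * intro C. apply HBnot. eapply cl_trans; [exact (Hall d)|]. eapply cl_trans; [exact C| exact HA].
    + split.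
      * apply (cl_of_fun (fun _ => nu)).
        -- intros q [j [Hj [Ej _]]]. exfalso. eauto.
        -- intros q q' [j [Hj [Ej _]]]. exfalso. eauto.
      * intros [f _]. destruct (f (exist _ i Hi)) as [q [j [Hj [Ej _]]]]. eauto.
  - intros F HF.
    set (wc := fun c => epsilon (inhabits nu) (fun w => lt c w /\ dec w = (c, F c))).
    assert (Hwc : forall c, lt c (wc c) /\ dec (wc c) = (c, F c)).
    { intro c. apply (epsilon_spec (inhabits nu) (fun w => lt c w /\ dec w = (c, F c))). apply Hcode. }
    assert (Hub : forall x, exists u, (forall c', lt c' x -> lt (wc c') u) /\ lt x u).
    { intro x.
      assert (Hbx : exists b, forall c', lt c' x -> le_of lt (wc c') b).
      { apply NNPP. intro N.
        apply Hbig. eapply cl_trans; [|exact (Hall x)].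
        eapply cl_trans; [apply (unb_big lt J nu Hwo HJ Hcomp (fun v => exists c', lt c' x /\ v = wc c'))|].
        - intro g. apply NNPP. intro N2. apply N. exists g. intros c' Hc'.
          destruct (Htri (wc c') g) as [L|[L|L]]; unfold le_of; auto. exfalso. apply N2. eauto.
        - apply (cl_of_fun (fun v => epsilon (inhabits nu) (fun c' => lt c' x /\ v = wc c'))).
          + intros v Hv. exact (proj1 (epsilon_spec (inhabits nu) _ Hv)).
          + intros v v' Hv Hv' E. cbv beta in E.
            pose proof (proj2 (epsilon_spec (inhabits nu) _ Hv)) as D1.
            pose proof (proj2 (epsilon_spec (inhabits nu) _ Hv')) as D2.
            congruence. }
      destruct Hbx as [b Hb].
      destruct (nomax lt J Hwo HJ (mx lt b x)) as [u Hu].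
      destruct (mx_ge lt Hwo b x) as [M1 M2].
      exists u. split.
      - intros c' Hc'. eapply (le_lt_trans lt Hwo); [exact (Hb c' Hc')|].
        eapply (le_lt_trans lt Hwo); eauto.
      - eapply (le_lt_trans lt Hwo); eauto. }
    set (ubf := fun x => epsilon (inhabits nu) (fun u => (forall c', lt c' x -> lt (wc c') u) /\ lt x u)).
    assert (Hubf : forall x, (forall c', lt c' x -> lt (wc c') (ubf x)) /\ lt x (ubf x)).
    { intro x. exact (epsilon_spec (inhabits nu) (fun u => (forall c', lt c' x -> lt (wc c') u) /\ lt x u) (Hub x)). }
    set (C := fun c => forall c', lt c' c -> lt (wc c') c).
    assert (HCunb : forall g, exists c, C c /\ lt g c).
    { intro g.
      set (gam := fun n => Nat.iter n ubf g).
      assert (Hgs : forall n, (forall c', lt c' (gam n) -> lt (wc c') (gam (S n))) /\ lt (gam n) (gam (S n))).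
      { intro n. exact (Hubf (gam n)). }
      assert (Hgb : exists b, forall n, le_of lt (gam n) b).
      { apply NNPP. intro N. apply Hbig.
        eapply cl_trans; [apply (unb_big lt J nu Hwo HJ Hcomp (fun v => exists n, v = gam n))|].
        - intro x. apply NNPP. intro N2. apply N. exists x. intro n.
          destruct (Htri (gam n) x) as [L|[L|L]]; unfold le_of; auto. exfalso. apply N2. eauto.
        - eapply cl_trans; [|exact Hnat].
          apply (cl_of_fun (fun v => epsilon (inhabits 0) (fun n => v = gam n))).
          + intros; exact I.
          + intros v v' Hv Hv' E. cbv beta in E.
            pose proof (epsilon_spec (inhabits 0) _ Hv) as D1.
            pose proof (epsilon_spec (inhabits 0) _ Hv') as D2. congruence. }
      destruct Hgb as [b Hb].
      destruct (wo_min lt Hwo (fun u => forall n, le_of lt (gam n) u) b Hb) as [u [Hu Hmin]].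
      exists u. split.
      - intros c' Hc'.
        assert (Hn : exists n, lt c' (gam n)).
        { apply NNPP. intro N. apply (Hmin c'); auto. intro n.
          destruct (Htri (gam n) c') as [L|[L|L]]; unfold le_of; auto. exfalso. apply N. eauto. }
        destruct Hn as [n Hn].
        eapply (lt_le_trans lt Hwo); [apply (proj1 (Hgs n)); exact Hn| apply Hu].
      - eapply (lt_le_trans lt Hwo); [apply (proj2 (Hgs 0))| apply Hu]. }
    set (W := fun v => exists c, C c /\ v = wc c).
    assert (HW : card_eq W (fullset K)).
    { split.
      - apply cl_sub. intros; exact I.
      - apply (unb_big lt J nu Hwo HJ Hcomp). intro g.
        destruct (HCunb g) as [c [Cc Hc]]. exists (wc c). split; [exists c; auto|].
        exact (Ht _ _ _ Hc (proj1 (Hwc c))). }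
    apply (HB2 W HW). apply (Hsub _ _ HF). intros d [j [Hj [Hs1 Hs2]]].
    exists (e d j). split; [apply (proj1 (He d)); auto|].
    exists (fun a => lt a d /\ B j d (wc a) /\ C a). split; [intros x [H _]; exact H|]. split.
    + split.
      * intros x [H _]. left; exact H.
      * intros g Hg. destruct (Hs2 g Hg) as [b1 [[[c1 [C1 ->]] B1] Hb1]].
        assert (Hb1d : lt (wc c1) d) by exact (proj1 (HB1 d j Hj) _ B1).
        destruct (Hs2 _ Hb1d) as [b2 [[[c2 [C2 ->]] B2] Hb2]].
        assert (L12 : lt c1 c2).
        { destruct (Htri c1 c2) as [L|[L|L]]; auto; exfalso.
          - subst. exact (Hirr _ Hb2).
          - pose proof (C1 c2 L) as X1. apply (Hirr (wc c2)).
            eapply Ht; [exact X1|]. eapply Ht; [exact (proj1 (Hwc c1))| exact Hb2]. }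
        exists c2. split.
        -- split; [|split; auto].
           eapply Ht; [exact (proj1 (Hwc c2))| exact (proj1 (HB1 d j Hj) _ B2)].
        -- eapply Ht; [exact Hb1| exact (C2 c1 L12)].
    + intros a [Ha [Ba Ca]]. exists j. split; auto. split; auto. exists (wc a). split; auto. apply Hwc.
Qed.
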